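(* Let $\ell_1,\ell_2\in H_1(\mathbb{C}^2)$ be fixed, non-proportional linear forms. Then a general binary quartic $p\in H_4(\mathbb{C}^2)$ has exactly two representations $$p(x,y) = (t_1x^2+t_2xy+t_3y^2)^2 + t_4\,\ell_1(x,y)^4 + t_5\,\ell_2(x,y)^4, \qquad t_i\in\mathbb{C}.$$
   Context: $H_d(\mathbb{C}^n)$ denotes the complex vector space of homogeneous polynomials of degree $d$ in $n$ variables. ''A general $p$ has property P'' means P holds for all $p$ in a nonempty Zariski-open subset of $H_d(\mathbb{C}^n)$. Two representations are considered the same if they agree up to replacing the quadratic form by its negative. *)

(* Defs.v *)
(* The field C of complex numbers is taken to be an arbitrary
   numClosedFieldType (algebraically closed field of characteristic 0 with
   complex conjugation/norm). *)
From HB Require Import structures.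
From mathcomp Require Import all_boot all_order all_algebra.
Set Implicit Arguments. Unset Strict Implicit. Unset Printing Implicit Defensive.
Import Order.TTheory GRing.Theory Num.Theory.
Local Open Scope ring_scope.

Section Defs.
Variable C : numClosedFieldType.

(* H_4(C^2) is identified with C^5 via coefficients:
   p(x,y) = \sum_k c_k x^(4-k) y^k. *)
Definition quartic_eval (c : 'I_5 -> C) (x y : C) : C :=
  \sum_(k < 5) c k * x ^+ (4 - k) * y ^+ k.

(* Polynomials in 5 variables (the coordinate ring of C^5 = H_4(C^2)),
   encoded as iterated univariate polynomials. *)
Definition mpoly5 := {poly {poly {poly {poly {poly C}}}}}.

Definition mpoly5_eval (P : mpoly5) (v : 'I_5 -> C) : C :=
  (map_poly (fun P3 =>
    (map_poly (fun P2 =>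
      (map_poly (fun P1 =>
        (map_poly (fun P0 : {poly C} => P0.[v (inord 0)]) P1).[v (inord 1)])
      P2).[v (inord 2)])
    P3).[v (inord 3)])
  P).[v (inord 4)].

(* Zariski-open subsets of C^5: complements of zero sets V(S) of a set S of
   polynomials. *)
Definition zariski_open (U : ('I_5 -> C) -> Prop) : Prop :=
  exists S : mpoly5 -> Prop,
    forall v, U v <-> exists f, S f /\ mpoly5_eval f v != 0.

Definition general_quartic (P : ('I_5 -> C) -> Prop) : Prop :=
  exists U, zariski_open U /\ (exists v, U v) /\ forall v, U v -> P v.

Definition lin_eval (l : C * C) (x y : C) : C := l.1 * x + l.2 * y.

Definition proportional (l1 l2 : C * C) : Prop :=
  (exists c : C, l1 = (c * l2.1, c * l2.2)) \/
  (exists c : C, l2 = (c * l1.1, c * l1.2)).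

Definition quad_eval (q : C * C * C) (x y : C) : C :=
  q.1.1 * x ^+ 2 + q.1.2 * x * y + q.2 * y ^+ 2.

Definition quad_opp (q : C * C * C) : C * C * C := (- q.1.1, - q.1.2, - q.2).

(* A representation: (q, (t4, t5)) with
   p = q^2 + t4 l1^4 + t5 l2^4 as polynomials (i.e. for all x y, C infinite). *)
Definition is_rep (l1 l2 : C * C) (c : 'I_5 -> C)
    (r : (C * C * C) * (C * C)) : Prop :=
  forall x y : C,
    quartic_eval c x y =
      quad_eval r.1 x y ^+ 2 + r.2.1 * lin_eval l1 x y ^+ 4
      + r.2.2 * lin_eval l2 x y ^+ 4.

Definition same_rep (r r' : (C * C * C) * (C * C)) : Prop :=
  r' = r \/ r' = (quad_opp r.1, r.2).

Definition exactly_two_reps (l1 l2 : C * C) (c : 'I_5 -> C) : Prop :=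
  exists r1 r2,
    [/\ is_rep l1 l2 c r1, is_rep l1 l2 c r2, ~ same_rep r1 r2 &
        forall r, is_rep l1 l2 c r -> same_rep r1 r \/ same_rep r2 r].

End Defs.

(* Main.v *)
Require Import Defs.
From HB Require Import structures.
From mathcomp Require Import all_boot all_order all_algebra.
From mathcomp Require Import ring.
Import Order.TTheory GRing.Theory Num.Theory.
Local Open Scope ring_scope.
Section S.
Variable C : numClosedFieldType.
Section Ev.
Variable v : 'I_5 -> C.
Definition e0 : {rmorphism {poly C} -> C} := horner_eval (v (inord 0)).
Definition e1 : {rmorphism {poly {poly C}} -> C} := horner_eval (v (inord 1)) \o map_poly e0.
Definition e2 : {rmorphism {poly {poly {poly C}}} -> C} := horner_eval (v (inord 2)) \o map_poly e1.
Definition e3 : {rmorphism {poly {poly {poly {poly C}}}} -> C} := horner_eval (v (inord 3)) \o map_poly e2.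
Definition e4 : {rmorphism mpoly5 C -> C} := horner_eval (v (inord 4)) \o map_poly e3.
Lemma e4E P : mpoly5_eval P v = e4 P. Proof. by []. Qed.
End Ev.
Ltac ev := rewrite /=; repeat (rewrite ?map_polyC ?map_polyX /= ?horner_evalE ?hornerC ?hornerX /=).
Lemma Kex : {K : C -> mpoly5 C | forall v k, e4 v (K k) = k}.
Proof. exists (fun k : C => k%:P%:P%:P%:P%:P) => v k; ev; done. Qed.
Definition K := sval Kex.
Lemma e4K v k : e4 v (K k) = k. Proof. exact: (svalP Kex). Qed.
Lemma Vex : {V : 'I_5 -> mpoly5 C | forall v, [/\ e4 v (V (inord 0)) = v (inord 0), e4 v (V (inord 1)) = v (inord 1),
  e4 v (V (inord 2)) = v (inord 2), e4 v (V (inord 3)) = v (inord 3) & e4 v (V (inord 4)) = v (inord 4)]}.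
Proof.
pose W (i : 'I_5) : mpoly5 C := match nat_of_ord i with
 | 0 => ('X : {poly C})%:P%:P%:P%:P
 | 1 => ('X : {poly {poly C}})%:P%:P%:P
 | 2 => ('X : {poly {poly {poly C}}})%:P%:P
 | 3 => ('X : {poly {poly {poly {poly C}}}})%:P
 | _ => 'X end.
exists W => v; rewrite /W !inordK //; split; ev; done.
Qed.
Definition V0 := sval Vex (inord 0).
Definition V1 := sval Vex (inord 1).
Definition V2 := sval Vex (inord 2).
Definition V3 := sval Vex (inord 3).
Definition V4 := sval Vex (inord 4).
Lemma e4V0 v : e4 v V0 = v (inord 0). Proof. by case: (svalP Vex v). Qed.
Lemma e4V1 v : e4 v V1 = v (inord 1). Proof. by case: (svalP Vex v). Qed.
Lemma e4V2 v : e4 v V2 = v (inord 2). Proof. by case: (svalP Vex v). Qed.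
Lemma e4V3 v : e4 v V3 = v (inord 3). Proof. by case: (svalP Vex v). Qed.
Lemma e4V4 v : e4 v V4 = v (inord 4). Proof. by case: (svalP Vex v). Qed.
Lemma e4D v P Q : e4 v (P + Q) = e4 v P + e4 v Q. Proof. exact: rmorphD. Qed.
Lemma e4M v P Q : e4 v (P * Q) = e4 v P * e4 v Q. Proof. exact: rmorphM. Qed.
Lemma e4B v P Q : e4 v (P - Q) = e4 v P - e4 v Q. Proof. exact: rmorphB. Qed.
Definition Pc0 (al be ga de c0 c1 c2 c3 c4 : C) : C := c0*(al^+4) + c1*(al^+3*ga) + c2*(al^+2*ga^+2) + c3*(al*ga^+3) + c4*(ga^+4).
Definition Pm0 (al be ga de : C) : mpoly5 C := K (al^+4)*V0 + K (al^+3*ga)*V1 + K (al^+2*ga^+2)*V2 + K (al*ga^+3)*V3 + K (ga^+4)*V4.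
Definition Pc1 (al be ga de c0 c1 c2 c3 c4 : C) : C := c0*(4%:R*al^+3*be) + c1*(al^+3*de + 3%:R*al^+2*be*ga) + c2*(2%:R*al^+2*ga*de + 2%:R*al*be*ga^+2) + c3*(3%:R*al*ga^+2*de + be*ga^+3) + c4*(4%:R*ga^+3*de).
Definition Pm1 (al be ga de : C) : mpoly5 C := K (4%:R*al^+3*be)*V0 + K (al^+3*de + 3%:R*al^+2*be*ga)*V1 + K (2%:R*al^+2*ga*de + 2%:R*al*be*ga^+2)*V2 + K (3%:R*al*ga^+2*de + be*ga^+3)*V3 + K (4%:R*ga^+3*de)*V4.
Definition Pc2 (al be ga de c0 c1 c2 c3 c4 : C) : C := c0*(6%:R*al^+2*be^+2) + c1*(3%:R*al^+2*be*de + 3%:R*al*be^+2*ga) + c2*(al^+2*de^+2 + 4%:R*al*be*ga*de + be^+2*ga^+2) + c3*(3%:R*al*ga*de^+2 + 3%:R*be*ga^+2*de) + c4*(6%:R*ga^+2*de^+2).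
Definition Pm2 (al be ga de : C) : mpoly5 C := K (6%:R*al^+2*be^+2)*V0 + K (3%:R*al^+2*be*de + 3%:R*al*be^+2*ga)*V1 + K (al^+2*de^+2 + 4%:R*al*be*ga*de + be^+2*ga^+2)*V2 + K (3%:R*al*ga*de^+2 + 3%:R*be*ga^+2*de)*V3 + K (6%:R*ga^+2*de^+2)*V4.
Definition Pc3 (al be ga de c0 c1 c2 c3 c4 : C) : C := c0*(4%:R*al*be^+3) + c1*(3%:R*al*be^+2*de + be^+3*ga) + c2*(2%:R*al*be*de^+2 + 2%:R*be^+2*ga*de) + c3*(al*de^+3 + 3%:R*be*ga*de^+2) + c4*(4%:R*ga*de^+3).
Definition Pm3 (al be ga de : C) : mpoly5 C := K (4%:R*al*be^+3)*V0 + K (3%:R*al*be^+2*de + be^+3*ga)*V1 + K (2%:R*al*be*de^+2 + 2%:R*be^+2*ga*de)*V2 + K (al*de^+3 + 3%:R*be*ga*de^+2)*V3 + K (4%:R*ga*de^+3)*V4.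
Definition Pc4 (al be ga de c0 c1 c2 c3 c4 : C) : C := c0*(be^+4) + c1*(be^+3*de) + c2*(be^+2*de^+2) + c3*(be*de^+3) + c4*(de^+4).
Definition Pm4 (al be ga de : C) : mpoly5 C := K (be^+4)*V0 + K (be^+3*de)*V1 + K (be^+2*de^+2)*V2 + K (be*de^+3)*V3 + K (de^+4)*V4.
Lemma e4Pm0 v al be ga de : e4 v (Pm0 al be ga de) = Pc0 al be ga de (v (inord 0)) (v (inord 1)) (v (inord 2)) (v (inord 3)) (v (inord 4)).
Proof. by rewrite /Pm0 /Pc0 !e4D !e4M !e4K e4V0 e4V1 e4V2 e4V3 e4V4; ring. Qed.
Lemma e4Pm1 v al be ga de : e4 v (Pm1 al be ga de) = Pc1 al be ga de (v (inord 0)) (v (inord 1)) (v (inord 2)) (v (inord 3)) (v (inord 4)).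
Proof. by rewrite /Pm1 /Pc1 !e4D !e4M !e4K e4V0 e4V1 e4V2 e4V3 e4V4; ring. Qed.
Lemma e4Pm2 v al be ga de : e4 v (Pm2 al be ga de) = Pc2 al be ga de (v (inord 0)) (v (inord 1)) (v (inord 2)) (v (inord 3)) (v (inord 4)).
Proof. by rewrite /Pm2 /Pc2 !e4D !e4M !e4K e4V0 e4V1 e4V2 e4V3 e4V4; ring. Qed.
Lemma e4Pm3 v al be ga de : e4 v (Pm3 al be ga de) = Pc3 al be ga de (v (inord 0)) (v (inord 1)) (v (inord 2)) (v (inord 3)) (v (inord 4)).
Proof. by rewrite /Pm3 /Pc3 !e4D !e4M !e4K e4V0 e4V1 e4V2 e4V3 e4V4; ring. Qed.
Lemma e4Pm4 v al be ga de : e4 v (Pm4 al be ga de) = Pc4 al be ga de (v (inord 0)) (v (inord 1)) (v (inord 2)) (v (inord 3)) (v (inord 4)).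
Proof. by rewrite /Pm4 /Pc4 !e4D !e4M !e4K e4V0 e4V1 e4V2 e4V3 e4V4; ring. Qed.
Lemma quartic_evalE (c : 'I_5 -> C) x y : quartic_eval c x y =
  c (inord 0) * x ^+ 4 + c (inord 1) * x ^+ 3 * y + c (inord 2) * x ^+ 2 * y ^+ 2
  + c (inord 3) * x * y ^+ 3 + c (inord 4) * y ^+ 4.
Proof.
rewrite /quartic_eval !big_ord_recl big_ord0.
have E0 : (ord0 : 'I_5) = inord 0 by apply/val_inj; rewrite /= inordK.
have E1 : (lift ord0 ord0 : 'I_5) = inord 1 by apply/val_inj; rewrite /= inordK.
have E2 : (lift ord0 (lift ord0 ord0) : 'I_5) = inord 2 by apply/val_inj; rewrite /= inordK.
have E3 : (lift ord0 (lift ord0 (lift ord0 ord0)) : 'I_5) = inord 3 by apply/val_inj; rewrite /= inordK.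
have E4 : (lift ord0 (lift ord0 (lift ord0 (lift ord0 ord0))) : 'I_5) = inord 4 by apply/val_inj; rewrite /= inordK.
rewrite -E0 -E1 -E2 -E3 -E4 /=.
ring.
Qed.
Lemma Gexp al be ga de c0 c1 c2 c3 c4 u v :
  c0 * (al*u+be*v) ^+ 4 + c1 * (al*u+be*v) ^+ 3 * (ga*u+de*v) + c2 * (al*u+be*v) ^+ 2 * (ga*u+de*v) ^+ 2
  + c3 * (al*u+be*v) * (ga*u+de*v) ^+ 3 + c4 * (ga*u+de*v) ^+ 4 =
  Pc0 al be ga de c0 c1 c2 c3 c4 * u ^+ 4 + Pc1 al be ga de c0 c1 c2 c3 c4 * u ^+ 3 * v
  + Pc2 al be ga de c0 c1 c2 c3 c4 * u ^+ 2 * v ^+ 2 + Pc3 al be ga de c0 c1 c2 c3 c4 * u * v ^+ 3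
  + Pc4 al be ga de c0 c1 c2 c3 c4 * v ^+ 4.
Proof. rewrite /Pc0 /Pc1 /Pc2 /Pc3 /Pc4; ring. Qed.
Lemma coef5 (d0 d1 d2 d3 d4 : C) :
  (forall u, d0 * u ^+ 4 + d1 * u ^+ 3 + d2 * u ^+ 2 + d3 * u + d4 = 0) ->
  [/\ d0 = 0, d1 = 0, d2 = 0, d3 = 0 & d4 = 0].
Proof.
pose F u := d0 * u ^+ 4 + d1 * u ^+ 3 + d2 * u ^+ 2 + d3 * u + d4.
move=> H; have H' : forall u, F u = 0 by exact: H.
have nz n : (n.+1%:R : C) != 0 by rewrite pnatr_eq0.
have h4 : d4 = 0 by have := H' 0; rewrite /F; move=> <-; ring.
have h0 : 24%:R * d0 = 0.
  transitivity (F 2 + F (-2) - 4%:R * (F 1 + F (-1)) + 6%:R * F 0); first by rewrite /F; ring.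
  by rewrite !H'; ring.
have {}h0 : d0 = 0 by move: h0 => /eqP; rewrite mulf_eq0 (negPf (nz 23%N)) => /eqP.
have h2 : 2%:R * d2 = 0.
  transitivity (F 1 + F (-1) - 2%:R * F 0 - 2%:R * d0); first by rewrite /F; ring.
  by rewrite !H' h0; ring.
have {}h2 : d2 = 0 by move: h2 => /eqP; rewrite mulf_eq0 (negPf (nz 1%N)) => /eqP.
have h1 : 12%:R * d1 = 0.
  transitivity (F 2 - F (-2) - 2%:R * (F 1 - F (-1))); first by rewrite /F; ring.
  by rewrite !H'; ring.
have {}h1 : d1 = 0 by move: h1 => /eqP; rewrite mulf_eq0 (negPf (nz 11%N)) => /eqP.
have h3 : 2%:R * d3 = 0.
  transitivity (F 1 - F (-1) - 2%:R * d1); first by rewrite /F; ring.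
  by rewrite !H' h1; ring.
have {}h3 : d3 = 0 by move: h3 => /eqP; rewrite mulf_eq0 (negPf (nz 1%N)) => /eqP.
by split.
Qed.
Lemma coef5' (p0 p1 p2 p3 p4 e0 e1 e2 e3 e4 : C) :
  (forall u, p0 * u ^+ 4 + p1 * u ^+ 3 + p2 * u ^+ 2 + p3 * u + p4 =
             e0 * u ^+ 4 + e1 * u ^+ 3 + e2 * u ^+ 2 + e3 * u + e4) ->
  [/\ p0 = e0, p1 = e1, p2 = e2, p3 = e3 & p4 = e4].
Proof.
move=> H.
have [] := @coef5 (p0 - e0) (p1 - e1) (p2 - e2) (p3 - e3) (p4 - e4).
  move=> u; have := H u; move/eqP; rewrite -subr_eq0 => /eqP <-; ring.
by move=> /subr0_eq -> /subr0_eq -> /subr0_eq -> /subr0_eq -> /subr0_eq ->.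
Qed.

Section Main.
Variables a1 a2 b1 b2 : C.
Hypothesis hD : a1 * b2 - a2 * b1 != 0.
Definition Dt := a1 * b2 - a2 * b1.
Definition al := Dt^-1 * b2.
Definition be := - (Dt^-1 * a2).
Definition ga := - (Dt^-1 * b1).
Definition de := Dt^-1 * a1.
Definition P0 (c : 'I_5 -> C) := Pc0 al be ga de (c (inord 0)) (c (inord 1)) (c (inord 2)) (c (inord 3)) (c (inord 4)).
Definition P1 (c : 'I_5 -> C) := Pc1 al be ga de (c (inord 0)) (c (inord 1)) (c (inord 2)) (c (inord 3)) (c (inord 4)).
Definition P2 (c : 'I_5 -> C) := Pc2 al be ga de (c (inord 0)) (c (inord 1)) (c (inord 2)) (c (inord 3)) (c (inord 4)).
Definition P3 (c : 'I_5 -> C) := Pc3 al be ga de (c (inord 0)) (c (inord 1)) (c (inord 2)) (c (inord 3)) (c (inord 4)).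
Definition P4 (c : 'I_5 -> C) := Pc4 al be ga de (c (inord 0)) (c (inord 1)) (c (inord 2)) (c (inord 3)) (c (inord 4)).

Lemma hX x y : al * (a1 * x + a2 * y) + be * (b1 * x + b2 * y) = x.
Proof. rewrite /al /be /Dt; field; exact: hD. Qed.
Lemma hY x y : ga * (a1 * x + a2 * y) + de * (b1 * x + b2 * y) = y.
Proof. rewrite /ga /de /Dt; field; exact: hD. Qed.
Lemma hU u v : a1 * (al * u + be * v) + a2 * (ga * u + de * v) = u.
Proof. rewrite /al /be /ga /de /Dt; field; exact: hD. Qed.
Lemma hV u v : b1 * (al * u + be * v) + b2 * (ga * u + de * v) = v.
Proof. rewrite /al /be /ga /de /Dt; field; exact: hD. Qed.

Lemma G_uv c u v : quartic_eval c (al * u + be * v) (ga * u + de * v) =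
  P0 c * u ^+ 4 + P1 c * u ^+ 3 * v + P2 c * u ^+ 2 * v ^+ 2 + P3 c * u * v ^+ 3 + P4 c * v ^+ 4.
Proof. by rewrite quartic_evalE Gexp. Qed.

Lemma Pcoef c e0 e1 e2 e3 e4 :
  (forall u, quartic_eval c (al * u + be) (ga * u + de) = e0 * u ^+ 4 + e1 * u ^+ 3 + e2 * u ^+ 2 + e3 * u + e4) ->
  [/\ P0 c = e0, P1 c = e1, P2 c = e2, P3 c = e3 & P4 c = e4].
Proof.
move=> H; apply: coef5' => u; rewrite -H.
have := G_uv c u 1; rewrite !mulr1 !expr1n !mulr1 => ->; done.
Qed.

Definition fwd (a b d : C) : C * C * C :=
  (a * a1 ^+ 2 + b * a1 * b1 + d * b1 ^+ 2,
   2%:R * a * a1 * a2 + b * (a1 * b2 + a2 * b1) + 2%:R * d * b1 * b2,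
   a * a2 ^+ 2 + b * a2 * b2 + d * b2 ^+ 2).
Definition bA (q : C * C * C) := q.1.1 * al ^+ 2 + q.1.2 * al * ga + q.2 * ga ^+ 2.
Definition bB (q : C * C * C) := 2%:R * q.1.1 * al * be + q.1.2 * (al * de + be * ga) + 2%:R * q.2 * ga * de.
Definition bD (q : C * C * C) := q.1.1 * be ^+ 2 + q.1.2 * be * de + q.2 * de ^+ 2.

Lemma fwd_eval a b d x y : quad_eval (fwd a b d) x y =
  a * (a1 * x + a2 * y) ^+ 2 + b * (a1 * x + a2 * y) * (b1 * x + b2 * y) + d * (b1 * x + b2 * y) ^+ 2.
Proof. rewrite /quad_eval /fwd /=; ring. Qed.
Lemma back_eval q u : quad_eval q (al * u + be) (ga * u + de) = bA q * u ^+ 2 + bB q * u + bD q.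
Proof. rewrite /quad_eval /bA /bB /bD; ring. Qed.
Lemma bB_fwd a b d : bB (fwd a b d) = b.
Proof. rewrite /bB /fwd /al /be /ga /de /Dt /=; field; exact: hD. Qed.
Lemma fwd_back q : fwd (bA q) (bB q) (bD q) = q.
Proof.
case: q => [[q1 q2] q3]; rewrite /fwd /bA /bB /bD /al /be /ga /de /Dt /=.
congr (_, _, _); field; exact: hD.
Qed.
Lemma fwd_opp a b d : fwd (- a) (- b) (- d) = quad_opp (fwd a b d).
Proof. rewrite /fwd /quad_opp /=; congr (_, _, _); ring. Qed.

Definition rep (s : C) (c : 'I_5 -> C) : (C * C * C) * (C * C) :=
  (fwd (P1 c / (2%:R * s)) s (P3 c / (2%:R * s)),
   (P0 c - (P1 c / (2%:R * s)) ^+ 2, P4 c - (P3 c / (2%:R * s)) ^+ 2)).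

Lemma rep_neg s c : rep (- s) c = (quad_opp (rep s c).1, (rep s c).2).
Proof.
rewrite /rep /= -fwd_opp !mulrN !invrN !mulrN !sqrrN; done.
Qed.

Lemma two_nz : (2%:R : C) != 0. Proof. by rewrite pnatr_eq0. Qed.

Lemma rep_is c s : s != 0 -> s ^+ 4 - P2 c * s ^+ 2 + P1 c * P3 c / 2%:R = 0 ->
  is_rep (a1, a2) (b1, b2) c (rep s c).
Proof.
move=> s0 hs x y; rewrite /rep /= fwd_eval /lin_eval /=.
have E : quartic_eval c x y = quartic_eval c (al * (a1 * x + a2 * y) + be * (b1 * x + b2 * y))
   (ga * (a1 * x + a2 * y) + de * (b1 * x + b2 * y)) by rewrite hX hY.
rewrite E G_uv.
have hP2 : P2 c = s ^+ 2 + P1 c * P3 c / (2%:R * s ^+ 2).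
  transitivity (P2 c + (s ^+ 4 - P2 c * s ^+ 2 + P1 c * P3 c / 2%:R) / s ^+ 2).
    by rewrite hs mul0r addr0.
  field; rewrite ?two_nz ?s0 //.
move: (a1 * x + a2 * y) (b1 * x + b2 * y) => u v.
rewrite hP2; field; rewrite ?two_nz ?s0 //.
Qed.

Lemma rep_uniq c r : P1 c != 0 -> is_rep (a1, a2) (b1, b2) c r ->
  exists B, [/\ B != 0, B ^+ 4 - P2 c * B ^+ 2 + P1 c * P3 c / 2%:R = 0 & r = rep B c].
Proof.
case: r => q [t4 t5] p1 H; rewrite /is_rep /= in H.
have [E0 E1 E2 E3 E4] : [/\ P0 c = bA q ^+ 2 + t4, P1 c = 2%:R * bA q * bB q,
   P2 c = bB q ^+ 2 + 2%:R * bA q * bD q, P3 c = 2%:R * bB q * bD q & P4 c = bD q ^+ 2 + t5].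
  apply: Pcoef => u; rewrite H back_eval /lin_eval /=.
  have := hU u 1; have := hV u 1; rewrite !mulr1 => -> ->; ring.
have B0 : bB q != 0.
  apply/eqP => B0; move: p1; rewrite E1 B0 mulr0 eqxx //.
exists (bB q); split => //.
  rewrite E1 E2 E3; field; rewrite ?two_nz //.
have hA : P1 c / (2%:R * bB q) = bA q by rewrite E1; field; rewrite ?two_nz ?B0.
have hDd : P3 c / (2%:R * bB q) = bD q by rewrite E3; field; rewrite ?two_nz ?B0.
rewrite /rep hA hDd E0 E4 fwd_back; congr (_, (_, _)); ring.
Qed.

Lemma two_reps c : P1 c * P3 c * (P2 c ^+ 2 - 2%:R * P1 c * P3 c) != 0 ->
  exactly_two_reps (a1, a2) (b1, b2) c.
Proof.
rewrite !mulf_eq0 !negb_or => /andP [/andP [p1 p3] dl].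
set Dl := P2 c ^+ 2 - 2%:R * P1 c * P3 c in dl.
pose w := sqrtC Dl.
have w2 : w ^+ 2 = Dl by exact: sqrtCK.
pose z1 := (P2 c + w) / 2%:R.
pose z2 := (P2 c - w) / 2%:R.
have zq z : z = z1 \/ z = z2 -> z ^+ 2 - P2 c * z + P1 c * P3 c / 2%:R = 0.
  case=> ->; (transitivity ((w ^+ 2 - Dl) / 4%:R);
    [rewrite /z1 /z2 /Dl; field; rewrite ?two_nz ?pnatr_eq0 // | by rewrite w2 subrr mul0r]).
have znz z : z ^+ 2 - P2 c * z + P1 c * P3 c / 2%:R = 0 -> z != 0.
  move=> h; apply/eqP => z0.
  have : P1 c * P3 c / 2%:R = 0 by rewrite -h z0; ring.
  by move/eqP; rewrite !mulf_eq0 invr_eq0 (negPf p1) (negPf p3) (negPf two_nz).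
have sq z : z = z1 \/ z = z2 ->
   sqrtC z != 0 /\ sqrtC z ^+ 4 - P2 c * sqrtC z ^+ 2 + P1 c * P3 c / 2%:R = 0.
  move=> hz; have h := zq z hz; split; first by rewrite sqrtC_eq0 znz.
  have -> : sqrtC z ^+ 4 = (sqrtC z ^+ 2) ^+ 2 by rewrite -exprM.
  by rewrite sqrtCK.
have [s10 s1q] := sq z1 (or_introl erefl).
have [s20 s2q] := sq z2 (or_intror erefl).
exists (rep (sqrtC z1) c), (rep (sqrtC z2) c); split.
- exact: rep_is.
- exact: rep_is.
- move=> hs.
  have hs' : sqrtC z2 = sqrtC z1 \/ sqrtC z2 = - sqrtC z1.
    case: hs => h; [left | right].
      by have := f_equal (fun r => bB r.1) h; rewrite /rep /= !bB_fwd.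
    by rewrite -rep_neg in h; have := f_equal (fun r => bB r.1) h; rewrite /rep /= !bB_fwd.
  have z12 : z1 = z2.
    by rewrite -(sqrtCK z1) -(sqrtCK z2); case: hs' => ->; rewrite ?sqrrN.
  have w0 : w = 0.
    transitivity (z1 - z2); first by rewrite /z1 /z2; field; rewrite ?two_nz.
    by rewrite z12 subrr.
  by move: dl; rewrite -w2 w0 expr0n /= eqxx.
- move=> r hr; have [B [B0 hB ->]] := @rep_uniq c r p1 hr.
  have : (2%:R * B ^+ 2 - P2 c - w) * (2%:R * B ^+ 2 - P2 c + w) = 0.
    transitivity (4%:R * (B ^+ 4 - P2 c * B ^+ 2 + P1 c * P3 c / 2%:R) + (Dl - w ^+ 2)).
      rewrite /Dl; field; rewrite ?two_nz //.
    by rewrite hB w2 subrr mulr0 addr0.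
  have fin s : sqrtC s ^+ 2 = B ^+ 2 -> same_rep (rep (sqrtC s) c) (rep B c).
    move=> e; have : (B - sqrtC s) * (B + sqrtC s) = 0 by rewrite -subr_sqr e subrr.
    move/eqP; rewrite mulf_eq0 => /orP [] /eqP h.
      by left; rewrite (subr0_eq h).
    by right; rewrite -rep_neg; congr rep; apply/eqP; rewrite -addr_eq0 h.
  move/eqP; rewrite mulf_eq0 => /orP [] /eqP h; [left | right]; apply: fin; rewrite sqrtCK.
    transitivity ((2%:R * B ^+ 2 - P2 c - w) / 2%:R + z1).
      by rewrite h mul0r add0r.
    rewrite /z1; field; rewrite ?two_nz //.
  transitivity ((2%:R * B ^+ 2 - P2 c + w) / 2%:R + z2).
    by rewrite h mul0r add0r.
  rewrite /z2; field; rewrite ?two_nz //.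
Qed.
End Main.
End S.

Theorem theorem4p7 (C : numClosedFieldType) (l1 l2 : C * C) :
  ~ proportional l1 l2 ->
  general_quartic (fun c => exactly_two_reps l1 l2 c).
Proof.
case: l1 l2 => [a1 a2] [b1 b2] np.
have hD : a1 * b2 - a2 * b1 != 0.
  apply/eqP => h; apply: np.
  have e : a1 * b2 = a2 * b1 by apply/subr0_eq.
  case: (eqVneq b1 0) => [b10|b1n].
    case: (eqVneq b2 0) => [b20|b2n].
      by right; exists 0; rewrite b10 b20 !mul0r.
    left; exists (a2 / b2); rewrite b10 mulr0 divfK //; congr (_, _).
    by move: e; rewrite b10 mulr0 => /eqP; rewrite mulf_eq0 (negPf b2n) orbF => /eqP.
  left; exists (a1 / b1); rewrite /= divfK //; congr (_, _); rewrite /=.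
  transitivity (a1 * b2 / b1); first by rewrite e; field; rewrite ?b1n.
  by field; rewrite ?b1n.
pose f (v : 'I_5 -> C) := P1 C a1 a2 b1 b2 v * P3 C a1 a2 b1 b2 v *
  (P2 C a1 a2 b1 b2 v ^+ 2 - 2%:R * P1 C a1 a2 b1 b2 v * P3 C a1 a2 b1 b2 v).
pose A := al C a1 a2 b1 b2; pose B := be C a1 a2 b1 b2; pose G := ga C a1 a2 b1 b2; pose E := de C a1 a2 b1 b2.
pose fP := Pm1 C A B G E * Pm3 C A B G E * (Pm2 C A B G E * Pm2 C A B G E - K C (2%:R) * Pm1 C A B G E * Pm3 C A B G E).
have fE v : mpoly5_eval fP v = f v.
  rewrite e4E /fP !e4M e4B !e4M e4K e4Pm1 e4Pm2 e4Pm3 /f expr2; done.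
exists (fun v => f v != 0); split; [|split].
- exists (fun g => g = fP) => v; split.
    by move=> h; exists fP; split => //; rewrite fE.
  by case=> g [-> h]; rewrite -fE.
- pose w0 := a1^+3*b1 + a1*b1^+3.
  pose w1 := a1^+3*b2 + 3%:R*a1^+2*a2*b1 + 3%:R*a1*b1^+2*b2 + a2*b1^+3.
  pose w2 := 3%:R*a1^+2*a2*b2 + 3%:R*a1*a2^+2*b1 + 3%:R*a1*b1*b2^+2 + 3%:R*a2*b1^+2*b2.
  pose w3 := 3%:R*a1*a2^+2*b2 + a2^+3*b1 + a1*b2^+3 + 3%:R*a2*b1*b2^+2.
  pose w4 := a2^+3*b2 + a2*b2^+3.
  pose cw (i : 'I_5) := nth 0 [:: w0; w1; w2; w3; w4] i.
  exists cw.
  have Q x y : quartic_eval cw x y = (a1 * x + a2 * y) ^+ 3 * (b1 * x + b2 * y)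
      + (a1 * x + a2 * y) * (b1 * x + b2 * y) ^+ 3.
    rewrite quartic_evalE /cw !inordK //= /w0 /w1 /w2 /w3 /w4; ring.
  have [p0 p1 p2 p3 p4] : [/\ P0 C a1 a2 b1 b2 cw = 0, P1 C a1 a2 b1 b2 cw = 1, P2 C a1 a2 b1 b2 cw = 0,
     P3 C a1 a2 b1 b2 cw = 1 & P4 C a1 a2 b1 b2 cw = 0].
    apply: Pcoef => u; rewrite Q.
    have := @hU C a1 a2 b1 b2 hD u 1; have := @hV C a1 a2 b1 b2 hD u 1; rewrite !mulr1 => -> ->; ring.
  rewrite /f p1 p2 p3.
  have -> : (1 * 1 * (0 ^+ 2 - 2%:R * 1 * 1) : C) = - 2%:R by ring.
  by rewrite oppr_eq0 two_nz.
- by move=> v; exact: two_reps.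
Qed.
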